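(* Let $X$ be a topological space in which every open set is a union of countably many clopen sets. The following are equivalent: (1) $X$ has the bounded-ideal convergence property; (2) for each family $\{f_d\}_{d\in\mathbb{N}\times\mathbb{N}}$ of Borel real-valued functions on $X$ which $\mathcal{I}_b$-converges to $0$, there is $A\in\mathcal{I}_b^*$ such that $\{f_d\}_{d\in A}$ converges pointwise to $0$; (3) for each family $\{f_d\}_{d\in\mathbb{N}\times\mathbb{N}}$ of Borel real-valued functions on $X$ which $\mathcal{I}_b$-converges to a Borel function $f$, there is $A\in\mathcal{I}_b^*$ such that $\{f_d\}_{d\in A}$ converges pointwise to $f$; (4) for each family $\{f_d\}_{d\in\mathbb{N}\times\mathbb{N}}$ of Borel real-valued functions on $X$ which $\mathcal{I}_b$-converges to a function $f:X\to\mathbb{R}$, there is $A\in\mathcal{I}_b^*$ such that $\{f_d\}_{d\in A}$ converges pointwise to $f$.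
   Context: For $h\in\mathbb{N}^{\mathbb{N}}$ let $A_h=\{(n,m)\in\mathbb{N}\times\mathbb{N}:m\le h(n)\}$. The bounded-ideal is $\mathcal{I}_b=\{B\subseteq\mathbb{N}\times\mathbb{N}:\exists h\in\mathbb{N}^{\mathbb{N}},\ B\subseteq A_h\}$ and $\mathcal{I}_b^*=\{(\mathbb{N}\times\mathbb{N})\setminus B:B\in\mathcal{I}_b\}$. A family $\{f_d\}_{d\in\mathbb{N}\times\mathbb{N}}$ of real functions on $X$ $\mathcal{I}_b$-converges to $f$ if for each $x\in X$ and $\epsilon>0$, $\{d:|f_d(x)-f(x)|<\epsilon\}\in\mathcal{I}_b^*$. For infinite $A$, $\{f_d\}_{d\in A}$ converges pointwise to $f$ if for each $x$ and $\epsilon>0$ only finitely many $d\in A$ have $|f_d(x)-f(x)|\ge\epsilon$. $X$ has the bounded-ideal convergence property if for each family $\{f_d\}_{d\in\mathbb{N}\times\mathbb{N}}$ of continuous real-valued functions on $X$ which $\mathcal{I}_b$-converges to $0$ there is $A\in\mathcal{I}_b^*$ with $\{f_d\}_{d\in A}$ converging pointwise to $0$. *)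

(* Defs.v *)
From Stdlib Require Import Reals List.
Open Scope R_scope.

Record Topology (X : Type) : Type := {
  is_open : (X -> Prop) -> Prop;
  open_full : is_open (fun _ => True);
  open_inter : forall U V, is_open U -> is_open V -> is_open (fun x => U x /\ V x);
  open_union : forall (I : Type) (F : I -> X -> Prop),
      (forall i, is_open (F i)) -> is_open (fun x => exists i, F i x)
}.
Arguments is_open {X} _ _.

Definition clopen {X : Type} (T : Topology X) (U : X -> Prop) : Prop :=
  is_open T U /\ is_open T (fun x => ~ U x).

Definition open_countable_union_clopen {X : Type} (T : Topology X) : Prop :=
  forall U, is_open T U ->
    exists C : nat -> X -> Prop,
      (forall n, clopen T (C n)) /\ (forall x, U x <-> exists n, C n x).

Definition R_open (V : R -> Prop) : Prop :=
  forall y, V y -> exists eps, 0 < eps /\ forall z, Rabs (z - y) < eps -> V z.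

Definition continuous_fun {X : Type} (T : Topology X) (f : X -> R) : Prop :=
  forall V, R_open V -> is_open T (fun x => V (f x)).

Definition sigma_algebra {X : Type} (S : (X -> Prop) -> Prop) : Prop :=
  S (fun _ => True) /\
  (forall A, S A -> S (fun x => ~ A x)) /\
  (forall F : nat -> X -> Prop, (forall n, S (F n)) -> S (fun x => exists n, F n x)).

Definition borel_set {X : Type} (T : Topology X) (B : X -> Prop) : Prop :=
  forall S : (X -> Prop) -> Prop, sigma_algebra S ->
    (forall U, is_open T U -> S U) -> S B.

Definition borel_fun {X : Type} (T : Topology X) (f : X -> R) : Prop :=
  forall V, R_open V -> borel_set T (fun x => V (f x)).

Definition A_h (h : nat -> nat) (d : nat * nat) : Prop := (snd d <= h (fst d))%nat.

Definition in_Ib (B : nat * nat -> Prop) : Prop :=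
  exists h : nat -> nat, forall d, B d -> A_h h d.

Definition in_Ib_star (A : nat * nat -> Prop) : Prop :=
  exists B, in_Ib B /\ forall d, A d <-> ~ B d.

Definition Ib_converges {X : Type} (fam : nat * nat -> X -> R) (f : X -> R) : Prop :=
  forall x eps, 0 < eps -> in_Ib_star (fun d => Rabs (fam d x - f x) < eps).

Definition finite_set {T : Type} (P : T -> Prop) : Prop :=
  exists l : list T, forall t, P t -> In t l.

Definition pointwise_converges_on {X : Type} (A : nat * nat -> Prop)
    (fam : nat * nat -> X -> R) (f : X -> R) : Prop :=
  forall x eps, 0 < eps ->
    finite_set (fun d => A d /\ Rabs (fam d x - f x) >= eps).

Definition bounded_ideal_convergence_property {X : Type} (T : Topology X) : Prop :=
  forall fam : nat * nat -> X -> R,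
    (forall d, continuous_fun T (fam d)) ->
    Ib_converges fam (fun _ => 0) ->
    exists A, in_Ib_star A /\ pointwise_converges_on A fam (fun _ => 0).

(* Main.v *)
Require Import Defs.
From Stdlib Require Import Reals ZArith List Lia Lra Psatz Classical FunctionalExtensionality PropExtensionality IndefiniteDescription ClassicalEpsilon Cantor.
Open Scope R_scope.

Lemma set_ext {X : Type} (A B : X -> Prop) : (forall x, A x <-> B x) -> A = B.
Proof. intro H; apply functional_extensionality; intro x; apply propositional_extensionality; auto. Qed.

Lemma open_ext {X : Type} (T : Topology X) (A B : X -> Prop) :
  (forall x, A x <-> B x) -> is_open T A -> is_open T B.
Proof. intros H HA; rewrite <- (set_ext A B H); exact HA. Qed.

Lemma open_empty {X : Type} (T : Topology X) : is_open T (fun _ => False).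
Proof.
  apply (open_ext T (fun x => exists i : False, (fun (i:False) (_:X) => True) i x)).
  - intros x; split; [intros [[] _]|intros []].
  - apply (@open_union X T); intros [].
Qed.

Lemma open_or {X : Type} (T : Topology X) A B :
  is_open T A -> is_open T B -> is_open T (fun x => A x \/ B x).
Proof.
  intros HA HB.
  apply (open_ext T (fun x => exists i : bool, (fun (i:bool) => if i then A else B) i x)).
  - intros x; split; [intros [[|] H]; auto| intros [H|H]; [exists true|exists false]; auto].
  - apply (@open_union X T); intros [|]; auto.
Qed.

Definition closed {X : Type} (T : Topology X) (F : X -> Prop) := is_open T (fun x => ~ F x).

Lemma clopen_ext {X : Type} (T : Topology X) (A B : X -> Prop) :
  (forall x, A x <-> B x) -> clopen T A -> clopen T B.
Proof.
  intros H [H1 H2]; split; [eapply open_ext; eauto|].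
  eapply open_ext; [|exact H2]. intro x; specialize (H x); tauto.
Qed.

Lemma clopen_compl {X : Type} (T : Topology X) A : clopen T A -> clopen T (fun x => ~ A x).
Proof.
  intros [H1 H2]; split; auto. eapply open_ext; [|exact H1]. intro x; split; [tauto|apply NNPP].
Qed.

Lemma clopen_and {X : Type} (T : Topology X) A B :
  clopen T A -> clopen T B -> clopen T (fun x => A x /\ B x).
Proof.
  intros [H1 H2] [H3 H4]; split; [apply (@open_inter X T); auto|].
  eapply open_ext; [|apply (open_or T _ _ H2 H4)]. intro x; tauto.
Qed.

Lemma clopen_full {X : Type} (T : Topology X) : clopen T (fun _ => True).
Proof. split; [apply (@open_full X T)|]. eapply open_ext; [|apply open_empty]. intro; tauto. Qed.

Lemma clopen_forall_lt {X : Type} (T : Topology X) (P : nat -> X -> Prop) :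
  (forall k, clopen T (P k)) -> forall m, clopen T (fun x => forall k, (k < m)%nat -> P k x).
Proof.
  intros HP m; induction m.
  - eapply clopen_ext; [|apply clopen_full]. intro x; split; intros; auto; lia.
  - eapply clopen_ext; [|apply (clopen_and T _ _ IHm (HP m))].
    intro x; split.
    + intros [H1 H2] k Hk. destruct (Nat.eq_dec k m); [subst; auto|apply H1; lia].
    + intros H; split; auto.
Qed.

Lemma clopen_closed {X : Type} (T : Topology X) A : clopen T A -> closed T A.
Proof. intros [_ H]; exact H. Qed.

Lemma closed_forall {X : Type} (T : Topology X) (P : nat -> X -> Prop) :
  (forall n, closed T (P n)) -> closed T (fun x => forall n, P n x).
Proof.
  intros H. unfold closed.
  eapply open_ext; [|apply (@open_union X T nat (fun n x => ~ P n x) H)].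
  intro x; split; [intros [n Hn] Hall; auto| intro Hn; apply not_all_ex_not; auto].
Qed.

Lemma closed_or {X : Type} (T : Topology X) A B : closed T A -> closed T B -> closed T (fun x => A x \/ B x).
Proof.
  intros H1 H2. unfold closed. eapply open_ext; [|apply (@open_inter X T _ _ H1 H2)]. intro; tauto.
Qed.

Lemma closed_exists_le {X : Type} (T : Topology X) (P : nat -> X -> Prop) :
  (forall n, closed T (P n)) -> forall j, closed T (fun x => exists a, (a <= j)%nat /\ P a x).
Proof.
  intros HP j; induction j.
  - unfold closed; eapply open_ext; [|apply (HP 0%nat)].
    intro x; split; [intros H [a [Ha Hp]]; assert (a = 0%nat) by lia; subst; auto|].
    intros H Hp; apply H; exists 0%nat; auto.
  - unfold closed; eapply open_ext; [|apply (closed_or T _ _ IHj (HP (S j)))].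
    intro x; split.
    + intros H [a [Ha Hp]]. apply H. destruct (Nat.eq_dec a (S j)); [subst; auto|left; exists a; split; auto; lia].
    + intros H [[a [Ha Hp]]|Hp]; apply H; [exists a; split; auto|exists (S j); auto].
Qed.

Lemma least_nat (P : nat -> Prop) : (exists k, P k) -> exists k, P k /\ forall j, (j < k)%nat -> ~ P j.
Proof.
  intros [k Hk]. induction k as [k IH] using (well_founded_induction Wf_nat.lt_wf).
  destruct (classic (exists j, (j < k)%nat /\ P j)) as [[j [Hj Pj]]|Hn].
  - apply (IH j Hj Pj).
  - exists k; split; auto. intros j Hj Pj; apply Hn; eauto.
Qed.

Lemma list_fst_bound (l : list (nat*nat)) : exists N, forall d, In d l -> (fst d < N)%nat.
Proof.
  induction l as [|a l [N HN]]; [exists 0%nat; intros d []|].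
  exists (S (Nat.max N (fst a))). intros d [<-|H]; [lia|specialize (HN d H); lia].
Qed.

Definition ind {X : Type} (E : X -> Prop) (x : X) : R :=
  if excluded_middle_informative (E x) then 1 else 0.

Lemma ind_continuous {X : Type} (T : Topology X) E : clopen T E -> continuous_fun T (ind E).
Proof.
  intros [H1 H2] V _. unfold ind.
  destruct (classic (V 1)) as [V1|V1]; destruct (classic (V 0)) as [V0|V0].
  - eapply open_ext; [|apply (@open_full X T)]. intro x; destruct excluded_middle_informative; tauto.
  - eapply open_ext; [|apply H1]. intro x; destruct excluded_middle_informative; tauto.
  - eapply open_ext; [|apply H2]. intro x; destruct excluded_middle_informative; tauto.
  - eapply open_ext; [|apply open_empty]. intro x; destruct excluded_middle_informative; tauto.
Qed.

Definition star_prop {X : Type} (T : Topology X) :=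
  forall E : nat * nat -> X -> Prop,
    (forall d, clopen T (E d)) ->
    (forall x, exists g : nat -> nat, forall n m, E (n, m) x -> (m <= g n)%nat) ->
    exists h : nat -> nat, forall x, finite_set (fun d => (h (fst d) < snd d)%nat /\ E d x).

Lemma P1_star {X : Type} (T : Topology X) : bounded_ideal_convergence_property T -> star_prop T.
Proof.
  intros P1 E HE Hcf.
  destruct (P1 (fun d => ind (E d))) as [A [[B [[h0 Hh0] HAB]] Hpw]].
  - intro d; apply ind_continuous; auto.
  - intros x eps Heps. destruct (Hcf x) as [g Hg].
    exists (fun d => ~ Rabs (ind (E d) x - 0) < eps). split.
    + exists g. intros [n m] Hd. unfold A_h; simpl. apply Hg.
      unfold ind in Hd. destruct excluded_middle_informative; auto.
      exfalso; apply Hd. rewrite Rminus_0_r, Rabs_R0; auto.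
    + intro d; split; [tauto|apply NNPP].
  - exists h0. intro x. destruct (Hpw x 1 Rlt_0_1) as [l Hl]. exists l.
    intros d [Hd HEd]. apply Hl. split.
    + apply HAB. intro HB. specialize (Hh0 d HB). unfold A_h in Hh0. lia.
    + unfold ind; destruct excluded_middle_informative; [|tauto].
      rewrite Rminus_0_r, Rabs_R1; lra.
Qed.

Lemma L1 {X : Type} (T : Topology X) (hX : open_countable_union_clopen T) (HS : star_prop T)
  (F : nat -> X -> Prop) : (forall p, closed T (F p)) ->
  exists D : nat -> X -> Prop, (forall p, clopen T (D p)) /\ (forall p x, F p x -> D p x) /\
    forall x, exists N, forall p, (N <= p)%nat -> D p x -> F p x.
Proof.
  intros HF.
  destruct (functional_choice (fun (p:nat) (C : nat -> X -> Prop) => (forall n, clopen T (C n)) /\ (forall x, ~ F p x <-> exists n, C n x)))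
    as [C HC]. { intro p. apply hX. apply HF. }
  set (E := fun d : nat * nat => fun x => C (fst d) (snd d) x /\ forall k, (k < snd d)%nat -> ~ C (fst d) k x).
  destruct (HS E) as [h Hh].
  - intros [p m]. unfold E; simpl. apply clopen_and; [apply HC|].
    apply clopen_forall_lt. intro k; apply clopen_compl, HC.
  - intro x. apply (functional_choice (fun p b => forall m, E (p, m) x -> (m <= b)%nat)). intro p.
    destruct (classic (F p x)) as [Fx|Fx].
    + exists 0%nat. intros m [Hm _]. exfalso. simpl in Hm. apply (proj2 (HC p) x); eauto.
    + apply (proj2 (HC p) x) in Fx. destruct Fx as [k Hk]. exists k. intros m [_ Hm]. simpl in Hm.
      destruct (Compare_dec.le_lt_dec m k); auto. exfalso; apply (Hm k); auto.
  - exists (fun p x => forall k, (k < S (h p))%nat -> ~ C p k x). split; [|split].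
    + intro p. apply clopen_forall_lt. intro k; apply clopen_compl, HC.
    + intros p x Fx k _ Ck. apply (proj2 (HC p) x); eauto.
    + intro x. destruct (Hh x) as [l Hl]. destruct (list_fst_bound l) as [N HN].
      exists N. intros p Hp HD. apply NNPP; intro nF.
      apply (proj2 (HC p) x) in nF. apply least_nat in nF. destruct nF as [k [Ck Hk]].
      assert (Hlt : (h p < k)%nat). { destruct (Compare_dec.le_lt_dec k (h p)); auto. exfalso; apply (HD k); auto; lia. }
      assert (In (p, k) l) as Hin. { apply Hl. simpl. split; auto. unfold E; simpl. split; auto. }
      specialize (HN _ Hin). simpl in HN. lia.
Qed.

Definition Fs {X : Type} (T : Topology X) (B : X -> Prop) :=
  exists F : nat -> X -> Prop, (forall n, closed T (F n)) /\ forall x, B x <-> exists n, F n x.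

Lemma L2 {X : Type} (T : Topology X) (hX : open_countable_union_clopen T) (HS : star_prop T)
  (A : X -> Prop) : Fs T A -> Fs T (fun x => ~ A x).
Proof.
  intros [F [HF HA]].
  destruct (L1 T hX HS (fun p x => exists q, (q <= p)%nat /\ F q x)) as [D [HD1 [HD2 HD3]]].
  { intro p; apply closed_exists_le; auto. }
  exists (fun N x => forall p, ~ D (N + p)%nat x). split.
  - intro N. apply closed_forall. intro p. apply clopen_closed, clopen_compl, HD1.
  - intro x. split.
    + intro nA. destruct (HD3 x) as [N HN]. exists N. intros p Hp.
      apply HN in Hp; [|lia]. destruct Hp as [q [_ Hq]]. apply nA, HA; eauto.
    + intros [N HN] Ax. apply HA in Ax. destruct Ax as [q Hq].
      apply (HN q). apply HD2. exists q; split; auto; lia.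
Qed.

Definition Kset {X : Type} (T : Topology X) (B : X -> Prop) := Fs T B /\ Fs T (fun x => ~ B x).

Lemma Fs_ext {X : Type} (T : Topology X) A B : (forall x, A x <-> B x) -> Fs T A -> Fs T B.
Proof. intros H [F [HF HA]]; exists F; split; auto; intro x; rewrite <- H; auto. Qed.

Lemma Fs_union {X : Type} (T : Topology X) (B : nat -> X -> Prop) :
  (forall n, Fs T (B n)) -> Fs T (fun x => exists n, B n x).
Proof.
  intros H. destruct (functional_choice _ H) as [F HF].
  exists (fun k => F (fst (of_nat k)) (snd (of_nat k))). split.
  - intro k; apply HF.
  - intro x; split.
    + intros [n Hn]. apply (proj2 (HF n)) in Hn. destruct Hn as [j Hj].
      exists (to_nat (n, j)). rewrite cancel_of_to; auto.
    + intros [k Hk]. exists (fst (of_nat k)). apply (proj2 (HF _)). eauto.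
Qed.

Lemma closed_Fs {X : Type} (T : Topology X) A : closed T A -> Fs T A.
Proof. intro H; exists (fun _ => A); split; auto. intro x; split; [exists 0%nat|intros [_ ?]]; auto. Qed.

Lemma borel_K {X : Type} (T : Topology X) (hX : open_countable_union_clopen T) (HS : star_prop T)
  (B : X -> Prop) : borel_set T B -> Kset T B.
Proof.
  intro HB. apply HB.
  - split; [|split].
    + split; apply closed_Fs; unfold closed.
      * eapply open_ext; [|apply open_empty]; intro; tauto.
      * eapply open_ext; [|apply (@open_full X T)]; intro; tauto.
    + intros A [H1 H2]. split; auto. eapply Fs_ext; [|exact H1]. intro; split; [tauto|apply NNPP].
    + intros F HF. assert (Hu : Fs T (fun x => exists n, F n x)) by (apply Fs_union; intro n; apply HF).
      split; auto. apply L2; auto.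
  - intros U HU. split.
    + destruct (hX U HU) as [C [HC HCU]]. exists C; split; auto. intro n; apply clopen_closed, HC.
    + apply closed_Fs. unfold closed. eapply open_ext; [|exact HU]. intro; split; [tauto|apply NNPP].
Qed.

Lemma borel_union {X : Type} (T : Topology X) (B : nat -> X -> Prop) :
  (forall n, borel_set T (B n)) -> borel_set T (fun x => exists n, B n x).
Proof. intros H S HS HO. apply (proj2 (proj2 HS)). intro n; apply H; auto. Qed.

Lemma core {X : Type} (T : Topology X) (hX : open_countable_union_clopen T) (HS : star_prop T)
  (L : nat * nat -> X -> Prop) : (forall d, borel_set T (L d)) ->
  (forall x, exists g : nat -> nat, forall n m, L (n, m) x -> (m <= g n)%nat) ->
  exists h : nat -> nat, forall x, finite_set (fun d => (h (fst d) < snd d)%nat /\ L d x).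
Proof.
  intros HB HL.
  set (Lc := fun (d : nat * nat) x => exists i, L (fst d, snd d + i)%nat x).
  assert (HK : forall d, Kset T (Lc d)).
  { intro d. apply borel_K; auto. unfold Lc. apply borel_union. intro; apply HB. }
  destruct (functional_choice (fun (d : nat*nat) (F : nat -> X -> Prop) =>
     (forall n, closed T (F n)) /\ forall x, ~ Lc d x <-> exists n, F n x)) as [F HF].
  { intro d. apply (HK d). }
  set (G := fun (d : nat * nat) x => exists a, (a <= snd d)%nat /\ exists k, (k <= snd d)%nat /\ F (fst d, a) k x).
  assert (HGc : forall d, closed T (G d)).
  { intro d. unfold G. apply closed_exists_le. intro a. apply closed_exists_le. intro; apply HF. }
  assert (G1 : forall n j x, G (n, j) x -> forall m, (j <= m)%nat -> ~ L (n, m) x).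
  { intros n j x [a [Ha [k [Hk HFk]]]] m Hm Lm. simpl in *.
    assert (~ Lc (n, a) x) as HnL by (apply (proj2 (HF (n,a))); eauto).
    apply HnL. exists (m - a)%nat. simpl. replace (a + (m - a))%nat with m by lia. auto. }
  assert (G2 : forall x n, exists j, G (n, j) x).
  { intros x n. destruct (HL x) as [g Hg].
    assert (~ Lc (n, S (g n)) x) as H.
    { intros [i Hi]. simpl in Hi. apply Hg in Hi. lia. }
    apply (proj2 (HF _)) in H. destruct H as [k Hk].
    exists (Nat.max (S (g n)) k). unfold G; cbn [fst snd]. exists (S (g n)). split. { lia. } exists k; split; [lia|auto]. }
  destruct (L1 T hX HS (fun p => G (of_nat p))) as [D [HD1 [HD2 HD3]]]. { intro; apply HGc. }
  set (D' := fun d => D (to_nat d)).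
  assert (HD2' : forall d x, G d x -> D' d x).
  { intros d x Hd. unfold D'. apply HD2. rewrite cancel_of_to; auto. }
  assert (HD3' : forall x, exists N, forall d, (N <= to_nat d)%nat -> D' d x -> G d x).
  { intro x. destruct (HD3 x) as [N HN]. exists N. intros d Hd HDd.
    rewrite <- (cancel_of_to d). apply HN; auto. }
  set (E := fun (d : nat * nat) x => D' d x /\ forall j, (j < snd d)%nat -> ~ D' (fst d, j) x).
  destruct (HS E) as [h Hh].
  - intros [n j]. unfold E; simpl. apply clopen_and; [apply HD1|].
    apply clopen_forall_lt. intro k; apply clopen_compl, HD1.
  - intro x. apply (functional_choice (fun n b => forall m, E (n, m) x -> (m <= b)%nat)). intro n.
    destruct (G2 x n) as [j0 Hj0]. exists j0. intros m [_ Hm]. simpl in Hm.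
    destruct (Compare_dec.le_lt_dec m j0); auto. exfalso. apply (Hm j0); auto.
  - exists h. intro x. destruct (Hh x) as [l1 Hl1]. destruct (HD3' x) as [N HN].
    destruct (HL x) as [g Hg].
    set (ns := map fst l1 ++ seq 0 N).
    exists (flat_map (fun n => map (pair n) (seq 0 (S (g n)))) ns).
    intros [n m] [Hhm Lm]. simpl in Hhm.
    apply in_flat_map. exists n. split.
    2:{ apply in_map. apply in_seq. specialize (Hg n m Lm). lia. }
    unfold ns. apply in_or_app.
    destruct (G2 x n) as [j0 Hj0].
    destruct (least_nat (fun j => D' (n, j) x)) as [j [Dj Hj]]. { exists j0; apply HD2'; auto. }
    destruct (Compare_dec.le_lt_dec j (h n)) as [Hle|Hlt].
    + right. apply in_seq. destruct (Compare_dec.le_lt_dec N (to_nat (n, j))) as [HN'|HN'].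
      * exfalso. apply (G1 n j x (HN _ HN' Dj) m); auto; lia.
      * pose proof (to_nat_non_decreasing n j). lia.
    + left. change n with (fst (n, j)). apply in_map. apply Hl1. simpl. split; auto.
      unfold E; simpl. split; auto.
Qed.

Lemma borel_ext {X : Type} (T : Topology X) A B : (forall x, A x <-> B x) -> borel_set T A -> borel_set T B.
Proof. intros H HA. rewrite <- (set_ext A B H). exact HA. Qed.

Lemma borel_compl {X : Type} (T : Topology X) A : borel_set T A -> borel_set T (fun x => ~ A x).
Proof. intros H S HS HO. apply (proj1 (proj2 HS)). apply H; auto. Qed.

Lemma borel_or {X : Type} (T : Topology X) A B : borel_set T A -> borel_set T B -> borel_set T (fun x => A x \/ B x).
Proof.
  intros HA HB. apply (borel_ext T (fun x => exists n, (fun n => match n with 0%nat => A | _ => B end) n x)).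
  - intro x; split; [intros [[|n] H]; auto|intros [H|H]; [exists 0%nat|exists 1%nat]; auto].
  - apply borel_union. intros [|n]; auto.
Qed.

Lemma borel_and {X : Type} (T : Topology X) A B : borel_set T A -> borel_set T B -> borel_set T (fun x => A x /\ B x).
Proof.
  intros HA HB. apply (borel_ext T (fun x => ~ (~ A x \/ ~ B x))).
  - intro x; tauto.
  - apply borel_compl, borel_or; apply borel_compl; auto.
Qed.

Lemma borel_lt {X : Type} (T : Topology X) g c : borel_fun T g -> borel_set T (fun x => g x < c).
Proof.
  intro H. apply (H (fun y => y < c)). intros y Hy. exists (c - y). split; [lra|].
  intros z Hz. apply Rabs_def2 in Hz. lra.
Qed.

Lemma borel_gt {X : Type} (T : Topology X) g c : borel_fun T g -> borel_set T (fun x => c < g x).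
Proof.
  intro H. apply (H (fun y => c < y)). intros y Hy. exists (y - c). split; [lra|].
  intros z Hz. apply Rabs_def2 in Hz. lra.
Qed.

Lemma ibc_bound {X : Type} (fam : nat * nat -> X -> R) f : Ib_converges fam f ->
  forall x eps, 0 < eps -> exists h0 : nat -> nat, forall n m, ~ (Rabs (fam (n, m) x - f x) < eps) -> (m <= h0 n)%nat.
Proof.
  intros H x eps Heps. destruct (H x eps Heps) as [B [[h0 Hh0] HAB]]. exists h0.
  intros n m Hn. apply (Hh0 (n, m)). apply NNPP. intro nB. apply Hn. apply HAB; auto.
Qed.

Definition grid (s a b : R) := exists z : Z, (a < IZR z * s /\ IZR z * s + s < b) \/ (b < IZR z * s /\ IZR z * s + s < a).

Lemma grid_of (s a b : R) : 0 < s -> 3 * s < Rabs (a - b) -> grid s a b.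
Proof.
  intros Hs H. destruct (Rle_or_lt a b) as [Hab|Hab].
  - rewrite Rabs_left1 in H by lra.
    destruct (archimed (a / s)) as [H1 H2]. exists (up (a / s)). left.
    assert (a = (a / s) * s) by (field; lra).
    assert ((IZR (up (a/s)) - a/s) * s > 0) by (apply Rmult_lt_0_compat; lra).
    assert ((1 - (IZR (up (a/s)) - a/s)) * s >= 0) by (apply Rle_ge, Rmult_le_pos; lra).
    split; lra.
  - rewrite Rabs_right in H by lra.
    destruct (archimed (b / s)) as [H1 H2]. exists (up (b / s)). right.
    assert (b = (b / s) * s) by (field; lra).
    assert ((IZR (up (b/s)) - b/s) * s > 0) by (apply Rmult_lt_0_compat; lra).
    assert ((1 - (IZR (up (b/s)) - b/s)) * s >= 0) by (apply Rle_ge, Rmult_le_pos; lra).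
    split; lra.
Qed.

Lemma grid_diff (s a b : R) : grid s a b -> s < Rabs (a - b).
Proof.
  intros [z [[H1 H2]|[H1 H2]]]; unfold Rabs; destruct Rcase_abs; lra.
Qed.

Lemma borel_grid {X : Type} (T : Topology X) s g1 g2 : borel_fun T g1 -> borel_fun T g2 ->
  borel_set T (fun x => grid s (g1 x) (g2 x)).
Proof.
  intros H1 H2.
  apply (borel_ext T (fun x => exists n, (fun n x => let z := (Z.of_nat (fst (of_nat n)) - Z.of_nat (snd (of_nat n)))%Z in
     (g1 x < IZR z * s /\ IZR z * s + s < g2 x) \/ (g2 x < IZR z * s /\ IZR z * s + s < g1 x)) n x)).
  - intro x; split.
    + intros [n Hn]. eexists; exact Hn.
    + intros [z Hz]. destruct (Z.le_gt_cases 0 z).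
      * exists (to_nat (Z.to_nat z, 0%nat)). cbv beta zeta. rewrite cancel_of_to. simpl.
        rewrite Z2Nat.id by lia. rewrite Z.sub_0_r. exact Hz.
      * exists (to_nat (0%nat, Z.to_nat (- z))). cbv beta zeta. rewrite cancel_of_to. simpl.
        rewrite Z2Nat.id by lia. rewrite Z.opp_involutive. exact Hz.
  - apply borel_union. intro n. cbv beta zeta.
    apply borel_or; apply borel_and; auto using borel_lt, borel_gt.
Qed.

Fixpoint mx (hk : nat -> nat -> nat) (n j : nat) : nat :=
  match j with 0%nat => hk 0%nat n | S j' => Nat.max (mx hk n j') (hk j n) end.

Lemma mx_ge hk n j k : (k <= j)%nat -> (hk k n <= mx hk n j)%nat.
Proof.
  induction j; intro H; simpl.
  - assert (k = 0%nat) by lia; subst; lia.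
  - destruct (Nat.eq_dec k (S j)); [subst; lia|]. specialize (IHj ltac:(lia)). lia.
Qed.

Lemma P1_P4 {X : Type} (T : Topology X) (hX : open_countable_union_clopen T) :
  bounded_ideal_convergence_property T ->
  forall (fam : nat * nat -> X -> R) (f : X -> R),
      (forall d, borel_fun T (fam d)) ->
      Ib_converges fam f ->
      exists A, in_Ib_star A /\ pointwise_converges_on A fam f.
Proof.
  intros P1 fam f Hfam Hconv. pose proof (P1_star T P1) as HS.
  set (sk := fun k : nat => / INR (S k) / 4).
  assert (Hsk : forall k, 0 < sk k).
  { intro k. unfold sk. apply Rdiv_lt_0_compat; [apply Rinv_0_lt_compat, lt_0_INR; lia|lra]. }
  set (Lk := fun k (d : nat * nat) x => exists i, grid (sk k) (fam d x) (fam (fst d, snd d + i)%nat x)).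
  assert (Hcore : forall k, exists h : nat -> nat, forall x, finite_set (fun d => (h (fst d) < snd d)%nat /\ Lk k d x)).
  { intro k. apply (core T); auto.
    - intro d. unfold Lk. apply borel_union. intro i. apply borel_grid; auto.
    - intro x. destruct (ibc_bound fam f Hconv x (sk k / 2)) as [h0 Hh0]. { pose proof (Hsk k); lra. }
      exists h0. intros n m [i Hi]. simpl in Hi.
      destruct (Compare_dec.le_lt_dec m (h0 n)) as [|Hlt]; auto. exfalso.
      apply grid_diff in Hi.
      assert (Rabs (fam (n, m) x - f x) < sk k / 2) as Ha.
      { apply NNPP; intro Hn. apply Hh0 in Hn. lia. }
      assert (Rabs (fam (n, (m + i)%nat) x - f x) < sk k / 2) as Hb.
      { apply NNPP; intro Hn. apply Hh0 in Hn. lia. }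
      apply Rabs_def2 in Ha. apply Rabs_def2 in Hb.
      assert (Rabs (fam (n, m) x - fam (n, (m + i)%nat) x) < sk k) as Hc.
      { apply Rabs_def1; lra. }
      lra. }
  destruct (functional_choice _ Hcore) as [hk Hhk].
  set (h := fun n => mx hk n n).
  exists (fun d => (h (fst d) < snd d)%nat). split.
  - exists (fun d => (snd d <= h (fst d))%nat). split.
    + exists h. intros d Hd; exact Hd.
    + intro d; lia.
  - intros x eps Heps.
    destruct (archimed_cor1 eps Heps) as [N [HN HN0]].
    destruct N as [|k]; [lia|].
    destruct (Hhk k x) as [lk Hlk].
    destruct (ibc_bound fam f Hconv x eps Heps) as [h0 Hh0].
    exists (lk ++ flat_map (fun n => map (pair n) (seq 0 (S (h0 n)))) (seq 0 k)).
    intros [n m] [Hhm Hbad]. simpl in Hhm. apply in_or_app.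
    assert (Hm0 : (m <= h0 n)%nat). { apply Hh0. apply Rle_not_lt. apply Rge_le; auto. }
    destruct (Compare_dec.le_lt_dec k n) as [Hkn|Hkn].
    + left. apply Hlk. simpl. split.
      * pose proof (mx_ge hk n n k Hkn). unfold h in Hhm. lia.
      * destruct (ibc_bound fam f Hconv x (sk k)) as [h1 Hh1]; auto.
        exists (Nat.max m (S (h1 n)) - m)%nat. simpl.
        replace (m + (Nat.max m (S (h1 n)) - m))%nat with (Nat.max m (S (h1 n))) by lia.
        apply grid_of; auto.
        assert (Rabs (fam (n, Nat.max m (S (h1 n))) x - f x) < sk k) as Hb.
        { apply NNPP; intro Hn. apply Hh1 in Hn. lia. }
        assert (Hsk4 : 4 * sk k = / INR (S k)) by (unfold sk; field; apply not_0_INR; lia).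
        apply Rabs_def2 in Hb.
        revert Hbad. unfold Rabs; destruct (Rcase_abs (fam (n, m) x - f x)); destruct Rcase_abs; intros; lra.
    + right. apply in_flat_map. exists n. split; [apply in_seq; lia|]. apply in_map, in_seq; lia.
Qed.
Lemma cont_borel {X : Type} (T : Topology X) g : continuous_fun T g -> borel_fun T g.
Proof. intros H V HV S HS HO. apply HO, H, HV. Qed.

Lemma const0_borel {X : Type} (T : Topology X) : borel_fun T (fun _ : X => 0).
Proof.
  intros V HV S HS HO. apply HO. destruct (classic (V 0)).
  - eapply open_ext; [|apply (@open_full X T)]. intro; tauto.
  - eapply open_ext; [|apply open_empty]. intro; tauto.
Qed.

Theorem mainTheorem15 (X : Type) (T : Topology X)
  (hX : open_countable_union_clopen T) :
  let P1 := bounded_ideal_convergence_property T in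
  let P2 := forall fam : nat * nat -> X -> R,
      (forall d, borel_fun T (fam d)) ->
      Ib_converges fam (fun _ => 0) ->
      exists A, in_Ib_star A /\ pointwise_converges_on A fam (fun _ => 0) in
  let P3 := forall (fam : nat * nat -> X -> R) (f : X -> R),
      (forall d, borel_fun T (fam d)) -> borel_fun T f ->
      Ib_converges fam f ->
      exists A, in_Ib_star A /\ pointwise_converges_on A fam f in
  let P4 := forall (fam : nat * nat -> X -> R) (f : X -> R),
      (forall d, borel_fun T (fam d)) ->
      Ib_converges fam f ->
      exists A, in_Ib_star A /\ pointwise_converges_on A fam f in
  (P1 <-> P2) /\ (P1 <-> P3) /\ (P1 <-> P4).
Proof.
  intros P1 P2 P3 P4.
  assert (H14 : P1 -> P4) by (intro H; unfold P4; intros; apply (P1_P4 T hX H); auto).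
  assert (H43 : P4 -> P3) by (intro H; unfold P3; intros fam f Hf _ Hc; apply H; auto).
  assert (H32 : P3 -> P2) by (intro H; unfold P2; intros fam Hf Hc; apply H; auto; apply const0_borel).
  assert (H21 : P2 -> P1).
  { intro H; unfold P1; intros fam Hf Hc. apply H; auto. intro d; apply cont_borel; auto. }
  tauto.
Qed.
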